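(* Let $X$ be a topological quandle and let $\{X_\alpha\}$ be the decomposition of $X$ into its path components, such that each $X_\alpha$ is indecomposable. Then $H_0(X)\cong\bigoplus_\alpha\mathbb{Z}$, with one copy of $\mathbb{Z}$ for each path component.
   Context: A quandle is a set with a binary operation $\triangleright$ such that $x\triangleright x=x$, each $\beta_y(x)=x\triangleright y$ is bijective, and $(x\triangleright y)\triangleright z=(x\triangleright z)\triangleright(y\triangleright z)$; write $x\triangleright^{-1}y=\beta_y^{-1}(x)$. A topological quandle is a topological space with a continuous quandle operation such that every $\beta_y$ is a homeomorphism. A path component $X_\alpha$ is called indecomposable if for every $x,y\in X_\alpha$ there exist $y_1,\dots,y_n\in X_\alpha$ and $e_1,\dots,e_n\in\{-1,1\}$ with $x=(\cdots((y\triangleright^{e_1}y_1)\triangleright^{e_2}y_2)\cdots)\triangleright^{e_n}y_n$. $C_0(X)$ is the free abelian group on points of $X$ (constant 0-simplices $\sigma_x$), $C_1(X)$ the free abelian group on paths $\sigma:[0,1]\to X$; for a path $\sigma_{[a,b]}$ from $a$ to $b$, $\partial_1\sigma_{[a,b]}=\sigma_a-\sigma_{a\triangleright b}$. $H_0(X)=C_0(X)/\partial_1(C_1(X))$. *)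

(* Defs.v *)
From HB Require Import structures.
From mathcomp Require Import all_boot all_algebra.
From mathcomp Require Import boolp classical_sets topology.
From mathcomp Require Import Rstruct Rstruct_topology.
From mathcomp Require Import freeg.

Set Implicit Arguments.
Unset Strict Implicit.
Unset Printing Implicit Defensive.

Import GRing.Theory.
Local Open Scope classical_set_scope.
Local Open Scope ring_scope.

Section QuandleDefs.
Context (X : topologicalType).

Definition is_path (sigma : Rdefinitions.R -> X) (a b : X) : Prop :=
  {within `[0%R, 1%R], continuous sigma} /\ sigma 0%R = a /\ sigma 1%R = b.

Definition path_conn (a b : X) : Prop := exists sigma, is_path sigma a b.

Definition path_comp (x : X) : set X := [set y | path_conn x y].

Definition path_components : set (set X) := [set A | exists x, A = path_comp x].

Definition pcomps : choiceType := {classic {A : set X | path_components A}}.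

Definition is_topological_quandle (op : X -> X -> X) : Prop :=
  [/\ continuous (fun p : X * X => op p.1 p.2),
      (forall x, op x x = x),
      (forall y, bijective (fun x => op x y)),
      (forall y, exists g : X -> X,
          cancel (fun x => op x y) g /\ cancel g (fun x => op x y) /\
          continuous (fun x => op x y) /\ continuous g) &
      (forall x y z, op (op x y) z = op (op x z) (op y z))].

(* chain op A y s x : x = (...((y |>^{e1} y1) |>^{e2} y2) ...) |>^{en} yn,
   where s = [:: (y1,b1); ...; (yn,bn)], e_i = 1 if b_i = true, -1 otherwise,
   all y_i in A.  z |>^{-1} w is the unique u with u |> w = z. *)
Fixpoint chain (op : X -> X -> X) (A : set X) (y : X) (s : seq (X * bool)) (x : X)
  : Prop :=
  match s with
  | [::] => x = y
  | (yi, b) :: s' =>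
      A yi /\ exists z, (if b then z = op y yi else op z yi = y) /\ chain op A z s' x
  end.

Definition indecomposable (op : X -> X -> X) (A : set X) : Prop :=
  forall x y, A x -> A y -> exists s, chain op A y s x.

(* C_0(X): free abelian group on the points of X; sigma_x is << x >>. *)
Definition C0 := {freeg X / int}.

Definition bd1 (op : X -> X -> X) (sigma : Rdefinitions.R -> X) : C0 :=
  << sigma 0%R >> - << op (sigma 0%R) (sigma 1%R) >>.

(* c lies in the image d_1(C_1(X)) : c = d_1 (sum_i k_i sigma_i) for paths sigma_i *)
Definition boundary (op : X -> X -> X) (c : C0) : Prop :=
  exists (n : nat) (k : 'I_n -> int) (sigma : 'I_n -> Rdefinitions.R -> X),
    (forall i, is_path (sigma i) (sigma i 0%R) (sigma i 1%R)) /\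
    c = \sum_(i < n) (bd1 op (sigma i) *~ k i).

End QuandleDefs.
Arguments pcomps X : clear implicits.
Arguments C0 X : clear implicits.

(* Main.v *)
Require Import Defs.
From HB Require Import structures.
From mathcomp Require Import all_boot all_algebra.
From mathcomp Require Import boolp classical_sets topology.
From mathcomp Require Import Rstruct Rstruct_topology.
From mathcomp Require Import freeg.
Set Implicit Arguments. Unset Strict Implicit.
Import GRing.Theory.
Local Open Scope classical_set_scope.
Local Open Scope ring_scope.
Notation R := Rdefinitions.R.
Section P.
Context (X : topologicalType).
Lemma wcomp (A B : set R) (g : R -> R) (f : R -> X) :
  (forall t, A t -> B (g t)) -> {within A, continuous g} ->
  {within B, continuous f} -> {within A, continuous (f \o g)}.
Proof.
move=> AB cg cf; apply/subspace_continuousP => t At.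
move/subspace_continuousP: cg => /(_ t At) cg.
move/subspace_continuousP: cf => /(_ _ (AB _ At)) cf.
apply: cvg_comp cf.
move=> W HW; move: cg; rewrite /cvg_to => cg.
have := cg _ HW. rewrite /= !nbhs_filterE /within /=.
apply: filterS => s H As; exact: H As (AB _ As).
Qed.
End P.
From mathcomp Require Import lra normedtype.
Import numFieldNormedType.Exports order.Order.TTheory Num.Theory.
Lemma cont_1m : continuous (fun t : R => 1 - t).
Proof.
move=> t; have := @cvgB R R^o _ (nbhs t) _ (fun=> 1) id 1 t.
by move=> H; apply: H; [exact: cvg_cst | exact: cvg_id].
Qed.
Lemma cont_2 : continuous (fun t : R => 2 * t).
Proof.
move=> t; have := @cvgMl_tmp R _ (nbhs t) _ id 2 t.
by move=> H; apply: H; exact: cvg_id.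
Qed.
Lemma cont_2m : continuous (fun t : R => 2 * t - 1).
Proof.
move=> t; have := @cvgB R R^o _ (nbhs t) _ (fun x => 2 * x) (fun=> 1) (2 * t) 1.
by move=> H; apply: H; [exact: cont_2 | exact: cvg_cst].
Qed.
Section P2.
Context (X : topologicalType).
Local Notation I := (`[0%R, 1%R]%classic : set R).

Lemma wglob (Y : topologicalType) (A : set R) (s : R -> X) (f : X -> Y) :
  {within A, continuous s} -> continuous f -> {within A, continuous (f \o s)}.
Proof. move=> cs cf x; exact: (@continuous_comp _ _ _ (from_subspace A s) f x (cs x) (cf _)). Qed.

Lemma pmap (Y : topologicalType) (f : X -> Y) a b :
  continuous f -> path_conn a b -> path_conn (f a) (f b).
Proof.
move=> cf [s [cs [s0 s1]]]; exists (f \o s); split; first exact: wglob.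
by rewrite /= s0 s1.
Qed.

Lemma prefl (a : X) : path_conn a a.
Proof.
exists (fun _ => a); split => //; apply: continuous_subspaceT.
exact: cst_continuous.
Qed.

Lemma psym (a b : X) : path_conn a b -> path_conn b a.
Proof.
move=> [s [cs [s0 s1]]]; exists (s \o (fun t => 1 - t)); split; last first.
  by rewrite /= subr0 subrr.
apply: (@wcomp X I I _ s) => //.
  move=> t; rewrite /= !in_itv /= => /andP[h1 h2]; apply/andP; split; lra.
exact: continuous_subspaceT cont_1m.
Qed.

Lemma ptrans (a b c : X) : path_conn a b -> path_conn b c -> path_conn a c.
Proof.
move=> [s [cs se]] [u [cu ue]].
exists (fun t => if t <= 1/2 then s (2 * t) else u (2 * t - 1)); split; last first.
  case: se ue => s0 s1 [u0 u1].
  split; first by rewrite ifT ?mulr0 //; lra.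
  case: ifP => h; first by exfalso; move: h; clear; lra.
  by rewrite -u1; congr u; lra.
have -> : I = `[0, 1/2] `|` `[1/2, 1].
  apply/seteqP; split => t; rewrite /= !in_itv /=.
    move=> /andP[h1 h2]; have [h|h] := lerP t (1/2); [left|right]; apply/andP; split => //; lra.
  by case=> /andP[h1 h2]; apply/andP; split; lra.
apply: withinU_continuous; [exact: interval_closed | exact: interval_closed | |].
- apply: (@subspace_eq_continuous _ _ _ (from_subspace _ (s \o (fun t => 2 * t)))).
    by move=> t; rewrite inE /= in_itv /= => /andP[h1 h2]; rewrite /from_subspace /= h2.
  apply: (@wcomp X _ I _ _) => //.
    move=> t; rewrite /= !in_itv /= => /andP[h1 h2]; apply/andP; split; lra.
  exact: continuous_subspaceT cont_2.
- apply: (@subspace_eq_continuous _ _ _ (from_subspace _ (u \o (fun t => 2 * t - 1)))).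
    move=> t; rewrite inE /= in_itv /= => /andP[h1 h2]; rewrite /from_subspace /=.
    have [h|h] := lerP t (1/2) => //.
    have -> : t = 1/2 by lra.
    have e1 : 2 * (1/2) = 1 :> R by lra.
    have e2 : 2 * (1/2) - 1 = 0 :> R by lra.
    by case: se ue => _ s1 [u0 _]; rewrite e2 e1 u0 s1.
  apply: (@wcomp X _ I _ _) => //.
    move=> t; rewrite /= !in_itv /= => /andP[h1 h2]; apply/andP; split; lra.
  exact: continuous_subspaceT cont_2m.
Qed.
End P2.

HB.instance Definition _ (Rg : nzRingType) (K : choiceType) (M : lmodType Rg) (f : K -> M) :=
  GRing.isZmodMorphism.Build _ _ (fglift f) (lift_is_additive f).

Lemma fg_ind (K : choiceType) (P : {freeg K / int} -> Prop) :
  P 0 -> (forall c d, P c -> P d -> P (c + d)) -> (forall k x, P << k *g x >>) ->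
  forall c, P c.
Proof.
move=> P0 PD PU c; rewrite -(freeg_sumE c).
elim: (dom c) => [|z s IH]; first by rewrite big_nil.
by rewrite big_cons; apply: PD.
Qed.

Section B.
Context (X : topologicalType) (op : X -> X -> X).

Lemma bd0 : boundary op 0.
Proof.
exists 0%N, (fun _ => 0),
  (fun i : 'I_0 => False_rect (R -> X)
     (Bool.diff_true_false (etrans (esym (ltn_ord i)) (ltn0 i)))).
by split; [case | rewrite big_ord0].
Qed.

Lemma bd_single (s : R -> X) : is_path s (s 0) (s 1) -> boundary op (bd1 op s).
Proof.
move=> hs; exists 1%N, (fun _ => 1), (fun _ => s); split => //.
by rewrite big_ord1.
Qed.

Lemma bd_add c d : boundary op c -> boundary op d -> boundary op (c + d).
Proof.
move=> [n [k [s [hs ->]]]] [m [l [u [hu ->]]]].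
exists (n + m)%N, (fun i => match split i with inl j => k j | inr j => l j end),
  (fun i => match split i with inl j => s j | inr j => u j end).
split; first by move=> i; case: (split i).
rewrite big_split_ord /=; congr (_ + _); apply: eq_bigr => i _.
  by rewrite (unsplitK (inl i)).
by rewrite (unsplitK (inr i)).
Qed.

Lemma bd_mulz c z : boundary op c -> boundary op (c *~ z).
Proof.
move=> [n [k [s [hs ->]]]]; exists n, (fun i => k i * z), s; split => //.
by rewrite mulrz_suml; apply: eq_bigr => i _; rewrite mulrzA.
Qed.

Lemma bd_opp c : boundary op c -> boundary op (- c).
Proof. by move=> h; rewrite -mulrN1z; apply: bd_mulz. Qed.
End B.

Section Q.
Context (X : topologicalType) (op : X -> X -> X) (hq : is_topological_quandle op).

Lemma left_cont a : continuous (fun x => op a x).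
Proof.
case: hq => hc _ _ _ _ x.
apply: (@continuous_comp _ _ _ (fun x => (a, x)) (fun p : X * X => op p.1 p.2)); last exact: hc.
by apply: cvg_pair; [exact: cvg_cst | exact: cvg_id].
Qed.

Lemma pop a b : path_conn a b -> path_conn a (op a b).
Proof.
move=> h; have := pmap (@left_cont a) h.
by case: hq => _ hi _ _ _; rewrite hi.
Qed.

Lemma pinv yi y z : op z yi = y -> path_conn y yi -> path_conn z yi.
Proof.
move=> e h; case: hq => _ hi _ /(_ yi) [g [c1 [c2 [_ cg]]]] _.
have e1 : g y = z by rewrite -e; exact: c1.
have e2 : g yi = yi by rewrite -{1}(hi yi); exact: c1.
by have := pmap cg h; rewrite e1 e2.
Qed.

Lemma samecomp (A : set X) (x y : X) : path_components A -> A x -> A y -> path_conn x y.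
Proof.
move=> [w ->] /= hx hy; exact: ptrans (psym hx) hy.
Qed.

Lemma comp_closed (A : set X) (x y : X) : path_components A -> A x -> path_conn x y -> A y.
Proof. move=> [w ->] /= hx hy; exact: ptrans hx hy. Qed.

Lemma chain_bd (A : set X) (HA : path_components A) s :
  forall y x, A y -> chain op A y s x -> boundary op (<< y >> - << x >>).
Proof.
elim: s => [|[yi b] s IH] y x Ay /=.
  by move=> ->; rewrite subrr; exact: bd0.
move=> [Ayi [z [hz hc]]].
have -> : << y >> - << x >> = (<< y >> - << z >>) + (<< z >> - << x >>) :> C0 X.
  by rewrite addrA subrK.
have pyyi := samecomp HA Ay Ayi.
case: b hz => hz.
  have Az : A z by rewrite hz; exact: comp_closed HA Ay (pop pyyi).
  apply: bd_add; last exact: IH.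
  case: pyyi => sg [cs [s0 s1]].
  have -> : << y >> - << z >> = bd1 op sg by rewrite /bd1 s0 s1 hz.
  apply: bd_single; split => //.
have pz := pinv hz pyyi.
have Az : A z by exact: comp_closed HA Ayi (psym pz).
apply: bd_add; last exact: IH.
case: pz => sg [cs [s0 s1]].
have -> : << y >> - << z >> = - bd1 op sg by rewrite /bd1 s0 s1 hz opprB.
apply/bd_opp/bd_single; split => //.
Qed.
End Q.

Section M.
Context (X : topologicalType).

Definition pc (x : X) : pcomps X :=
  exist _ (path_comp x) (ex_intro (fun y => path_comp x = path_comp y) x erefl).

Definition rep (A : pcomps X) : X := proj1_sig (cid (proj2_sig A)).

Lemma rep_spec (A : pcomps X) : proj1_sig A = path_comp (rep A).
Proof. exact: proj2_sig (cid (proj2_sig A)). Qed.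

Lemma pcomps_eq (A1 A2 : pcomps X) : proj1_sig A1 = proj1_sig A2 -> A1 = A2.
Proof.
case: A1 A2 => [B1 H1] [B2 H2] /= e; subst B2; congr exist; exact: Prop_irrelevance.
Qed.

Lemma pc_rep A : pc (rep A) = A.
Proof. by apply: pcomps_eq; rewrite /= -rep_spec. Qed.

Lemma pc_eq (a b : X) : path_conn a b -> pc a = pc b.
Proof.
move=> h; apply: pcomps_eq => /=; apply/seteqP; split => y /= hy.
  exact: ptrans (psym h) hy.
exact: ptrans h hy.
Qed.

Definition phi : C0 X -> {freeg (pcomps X) / int} := fglift (fun x => << pc x >>).
Definition psi : {freeg (pcomps X) / int} -> C0 X := fglift (fun A => << rep A >>).
Definition rho : C0 X -> C0 X := fglift (fun x => << rep (pc x) >>).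

Lemma rho_psi c : rho c = psi (phi c).
Proof.
rewrite /rho /phi /psi.
elim/fg_ind: c => [|c d IHc IHd|k x]; first by rewrite !raddf0.
  by rewrite !raddfD /= IHc IHd.
rewrite !liftU -[k]intz !scaler_int raddfMz /= liftU scale1r.
by [].
Qed.
End M.

Lemma scalez (V : lmodType int) (k : int) (v : V) : k *: v = v *~ k.
Proof. by rewrite -[k in LHS]intz scaler_int. Qed.

Lemma scaleU (K : choiceType) (k : int) (x : K) :
  k *: << x >> = << k *g x >> :> {freeg K / int}.
Proof. rewrite -[k in LHS]intz. rewrite scaler_int freegU_mulz intz. reflexivity. Qed.

Unset Implicit Arguments.
Local Close Scope classical_set_scope.

Theorem mainTheorem7 (X : topologicalType) (op : X -> X -> X)
  (hq : is_topological_quandle op)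
  (hind : forall A : set X, path_components A -> indecomposable op A) :
  exists phi : C0 X -> {freeg (pcomps X) / int},
    (forall c d : C0 X, phi (c - d) = phi c - phi d) /\
    (forall d : {freeg (pcomps X) / int}, exists c : C0 X, phi c = d) /\
    (forall c : C0 X, phi c = 0 <-> boundary op c).
Proof.
exists (@phi X); split; first by move=> c d; rewrite /phi raddfB.
split.
  elim/fg_ind => [|d1 d2 [c1 h1] [c2 h2]|k A].
  - by exists 0; rewrite /phi raddf0.
  - by exists (c1 + c2); rewrite /phi raddfD /= -h1 -h2.
  - by exists << k *g rep A >>; rewrite /phi liftU pc_rep scaleU.
move=> c; split; last first.
  move=> [n [k [s [hs ->]]]]; rewrite /phi raddf_sum; apply: big1 => i _.
  rewrite raddfMz /= /bd1 raddfB /= !liftU.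
  have hp : path_conn (s i 0) (s i 1) by exists (s i).
  by rewrite (pc_eq (pop hq hp)) subrr mul0rz.
move=> h0; have hr : rho c = 0 by rewrite rho_psi h0 /psi raddf0.
suff : boundary op (c - rho c) by rewrite hr subr0.
elim/fg_ind: c {h0 hr} => [|c d IHc IHd|k x].
- by rewrite /rho raddf0 subr0; exact: bd0.
- have -> : c + d - rho (c + d) = (c - rho c) + (d - rho d).
    by rewrite /rho raddfD /= opprD addrACA.
  exact: bd_add.
- rewrite /rho liftU -(scaleU k x) -scalerBr scalez; apply: bd_mulz.
  pose B := path_comp (rep (pc x)).
  have HB : path_components B by exists (rep (pc x)).
  have eB : B = path_comp x by rewrite /B -rep_spec.
  have Bx : B x by rewrite eB; exact: prefl.
  have Br : B (rep (pc x)) by exact: prefl.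
  have [s hs] := hind B HB (rep (pc x)) x Br Bx.
  exact: (@chain_bd X op hq B HB s x (rep (pc x)) Bx hs).
Qed.
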